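(* The logic $\mathsf{sICL}=\mathsf{ICK}\oplus(q\to(p\mathrel{\Box\!\!\!\rightarrow} q))\oplus((p\mathrel{\Box\!\!\!\rightarrow}(p\mathrel{\Box\!\!\!\rightarrow} q))\to(p\mathrel{\Box\!\!\!\rightarrow} q))$ is sound and complete with respect to the class of conditional frames $(X,\leq,\mathcal{R})$ such that for all $x,y\in X$ and $R_a\in\mathcal{R}$: $xR_ay$ implies $x\leq y$, and $xR_ay$ implies $x(R_a\circ R_a\circ\leq)y$.
   Context: Formulas: $\phi ::= p\mid\bot\mid\phi\wedge\phi\mid\phi\vee\phi\mid\phi\to\phi\mid\phi\mathrel{\Box\!\!\!\rightarrow}\phi$. $\mathsf{ICK}\oplus\Gamma$ is the smallest set containing intuitionistic propositional logic, $\Gamma$, $(p\mathrel{\Box\!\!\!\rightarrow}(q\wedge r))\leftrightarrow((p\mathrel{\Box\!\!\!\rightarrow} q)\wedge(p\mathrel{\Box\!\!\!\rightarrow} r))$ and $(p\mathrel{\Box\!\!\!\rightarrow}\top)\leftrightarrow\top$, closed under uniform substitution, modus ponens and congruence rules for both arguments of $\mathrel{\Box\!\!\!\rightarrow}$. A conditional frame is $(X,\leq,\mathcal{R})$, $(X,\leq)$ a nonempty preorder, $\mathcal{R}=\{R_a\mid a\text{ an upset}\}$ with $(\leq\circ R_a)\subseteq(R_a\circ\leq)$; valuations assign upsets to letters and $x\models\phi\mathrel{\Box\!\!\!\rightarrow}\psi$ iff every $y$ with $xR_{V(\phi)}y$ satisfies $\psi$. Relation composition $R\circ S$ relates $x$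 to $z$ if $xRy$ and $ySz$ for some $y$. *)

(* Defs.v *)
Inductive form : Type :=
| Var  : nat -> form
| Bot  : form
| And  : form -> form -> form
| Or   : form -> form -> form
| Imp  : form -> form -> form
| Cond : form -> form -> form.

Definition Top : form := Imp Bot Bot.
Definition Iff (a b : form) : form := And (Imp a b) (Imp b a).

Fixpoint subst (s : nat -> form) (f : form) : form :=
  match f with
  | Var n => s n
  | Bot => Bot
  | And a b => And (subst s a) (subst s b)
  | Or a b => Or (subst s a) (subst s b)
  | Imp a b => Imp (subst s a) (subst s b)
  | Cond a b => Cond (subst s a) (subst s b)
  end.

Definition p : form := Var 0.
Definition q : form := Var 1.
Definition r : form := Var 2.

(* ICK (+) Gam : smallest set containing IPC (given by a complete Hilbert
   axiomatisation, all instances over the full language), Gam, the two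
   conditional axioms, closed under uniform substitution, modus ponens and
   congruence in both arguments of []->. *)
Inductive ICK (Gam : form -> Prop) : form -> Prop :=
| ipc_K  : forall a b, ICK Gam (Imp a (Imp b a))
| ipc_S  : forall a b c,
    ICK Gam (Imp (Imp a (Imp b c)) (Imp (Imp a b) (Imp a c)))
| ipc_andE1 : forall a b, ICK Gam (Imp (And a b) a)
| ipc_andE2 : forall a b, ICK Gam (Imp (And a b) b)
| ipc_andI  : forall a b, ICK Gam (Imp a (Imp b (And a b)))
| ipc_orI1  : forall a b, ICK Gam (Imp a (Or a b))
| ipc_orI2  : forall a b, ICK Gam (Imp b (Or a b))
| ipc_orE   : forall a b c,
    ICK Gam (Imp (Imp a c) (Imp (Imp b c) (Imp (Or a b) c)))
| ipc_efq   : forall a, ICK Gam (Imp Bot a)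
| ax_cond_and : ICK Gam (Iff (Cond p (And q r)) (And (Cond p q) (Cond p r)))
| ax_cond_top : ICK Gam (Iff (Cond p Top) Top)
| ax_gam : forall a, Gam a -> ICK Gam a
| rule_subst : forall s a, ICK Gam a -> ICK Gam (subst s a)
| rule_mp : forall a b, ICK Gam (Imp a b) -> ICK Gam a -> ICK Gam b
| rule_congL : forall a b c, ICK Gam (Iff a b) -> ICK Gam (Iff (Cond a c) (Cond b c))
| rule_congR : forall a b c, ICK Gam (Iff a b) -> ICK Gam (Iff (Cond c a) (Cond c b)).

Inductive sICL_ax : form -> Prop :=
| sicl_1 : sICL_ax (Imp q (Cond p q))
| sicl_2 : sICL_ax (Imp (Cond p (Cond p q)) (Cond p q)).

Definition sICL : form -> Prop := ICK sICL_ax.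

Definition upset {X : Type} (le : X -> X -> Prop) (a : X -> Prop) : Prop :=
  forall x y, le x y -> a x -> a y.

(* A conditional frame (X, le, R): R a is the relation R_a, only relevant
   (and only constrained) for upsets a. *)
Definition cond_frame (X : Type) (le : X -> X -> Prop)
    (R : (X -> Prop) -> X -> X -> Prop) : Prop :=
  inhabited X /\
  (forall x, le x x) /\
  (forall x y z, le x y -> le y z -> le x z) /\
  (forall a, upset le a -> forall x y z, le x y -> R a y z ->
     exists w, R a x w /\ le w z).

Definition sICL_frame (X : Type) (le : X -> X -> Prop)
    (R : (X -> Prop) -> X -> X -> Prop) : Prop :=
  forall a, upset le a ->
    (forall x y, R a x y -> le x y) /\
    (forall x y, R a x y -> exists u v, R a x u /\ R a u v /\ le v y).

Fixpoint sat {X : Type} (le : X -> X -> Prop) (R : (X -> Prop) -> X -> X -> Prop)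
    (V : nat -> X -> Prop) (x : X) (f : form) : Prop :=
  match f with
  | Var n => V n x
  | Bot => False
  | And a b => sat le R V x a /\ sat le R V x b
  | Or a b => sat le R V x a \/ sat le R V x b
  | Imp a b => forall y, le x y -> sat le R V y a -> sat le R V y b
  | Cond a b => forall y, R (fun z => sat le R V z a) x y -> sat le R V y b
  end.

Definition sICL_valid (f : form) : Prop :=
  forall (X : Type) (le : X -> X -> Prop) (R : (X -> Prop) -> X -> X -> Prop)
         (V : nat -> X -> Prop),
    cond_frame X le R -> sICL_frame X le R ->
    (forall n, upset le (V n)) ->
    forall x, sat le R V x f.

(* Main.v *)
Require Import Defs.
From Stdlib Require Import Classical FunctionalExtensionality PropExtensionality Cantor Lia PeanoNat.

Lemma persist (X : Type) (le : X -> X -> Prop) (R : (X -> Prop) -> X -> X -> Prop) (V : nat -> X -> Prop) (HF: cond_frame X le R) (HV: forall n, upset le (V n)) f :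
  forall x y, le x y -> sat le R V x f -> sat le R V y f.
Proof.
  destruct HF as (_ & Hrefl & Htrans & Hc).
  induction f; simpl; intros x y Hxy H.
  - exact (HV n x y Hxy H).
  - exact H.
  - destruct H; split; eauto.
  - destruct H; [left|right]; eauto.
  - intros z Hyz; apply H; eauto.
  - intros z Hyz.
    destruct (Hc (fun z => sat le R V z f1) IHf1 x y z Hxy Hyz) as (w & Hxw & Hwz).
    eapply IHf2; eauto.
Qed.

Lemma sat_subst (X : Type) (le : X -> X -> Prop) (R : (X -> Prop) -> X -> X -> Prop) (V : nat -> X -> Prop) (s : nat -> form) (a : form) : forall x,
  sat le R V x (subst s a) <-> sat le R (fun n y => sat le R V y (s n)) x a.
Proof.
  induction a; simpl; intros x.
  - reflexivity.
  - reflexivity.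
  - rewrite IHa1, IHa2; reflexivity.
  - rewrite IHa1, IHa2; reflexivity.
  - split; intros H y Hxy Ha.
    + apply IHa2, H, IHa1; auto.
    + apply IHa2, H, IHa1; auto.
  - assert (E : (fun z => sat le R V z (subst s a1)) =
                (fun z => sat le R (fun n y => sat le R V y (s n)) z a1)).
    { apply functional_extensionality; intro z; apply propositional_extensionality; apply IHa1. }
    rewrite E.
    split; intros H y Hy; apply IHa2; auto.
Qed.

Lemma sound f : sICL f -> sICL_valid f.
Proof.
  induction 1; unfold sICL_valid; intros X le R V HF HS HV x;
  pose proof HF as HF'; destruct HF' as (_ & Hrefl & Htrans & Hc);
  unfold Iff, Top in *; simpl.
  - intros y _ Ha z Hyz _; eapply persist; eauto.
  - intros y1 _ H1 y2 H12 H2 y3 H23 Ha.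
    apply (H1 y3 (Htrans _ _ _ H12 H23) Ha y3 (Hrefl _)).
    exact (H2 y3 H23 Ha).
  - intros y _ [A B]; exact A.
  - intros y _ [A B]; exact B.
  - intros y1 _ Ha y2 H12 Hb; split; [eapply persist; eauto | exact Hb].
  - intros y _ Ha; left; exact Ha.
  - intros y _ Ha; right; exact Ha.
  - intros y1 _ H1 y2 H12 H2 y3 H23 [Ha|Hb].
    + exact (H1 y3 (Htrans _ _ _ H12 H23) Ha).
    + exact (H2 y3 H23 Hb).
  - intros y _ [].
  - split.
    + intros y _ H; split; intros z Hz; destruct (H z Hz); auto.
    + intros y _ [H1 H2] z Hz; split; auto.
  - split.
    + intros y _ _ z _ H; exact H.
    + intros y _ _ z _ w _ [].
  - destruct H.
    + intros y Hxy Hq z Hyz.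
      destruct (HS (fun z => V 0 z) (HV 0)) as [H1 _].
      exact (HV 1 y z (H1 y z Hyz) Hq).
    + intros y Hxy H z Hyz.
      destruct (HS (fun z => V 0 z) (HV 0)) as [_ H2].
      destruct (H2 y z Hyz) as (u & v & Hyu & Huv & Hvz).
      exact (HV 1 v z Hvz (H u Hyu v Huv)).
  - apply sat_subst. apply IHICK; auto.
    intros n y z Hyz Hy. eapply persist; eauto.
  - exact (IHICK1 X le R V HF HS HV x x (Hrefl x) (IHICK2 X le R V HF HS HV x)).
  - assert (E : (fun z => sat le R V z a) = (fun z => sat le R V z b)).
    { apply functional_extensionality; intro z; apply propositional_extensionality.
      destruct (IHICK X le R V HF HS HV z) as [H1 H2]. simpl in H1, H2.
      split; [apply H1|apply H2]; auto. }
    rewrite E. split; intros y _ H0; exact H0.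
  - split; intros y _ H0 z Hz; destruct (IHICK X le R V HF HS HV z) as [H1 H2].
    + apply (H1 z (Hrefl z)). apply H0; exact Hz.
    + apply (H2 z (Hrefl z)). apply H0; exact Hz.
Qed.

Inductive Der (G : form -> Prop) : form -> Prop :=
| d_hyp : forall a, G a -> Der G a
| d_thm : forall a, sICL a -> Der G a
| d_mp : forall a b, Der G (Imp a b) -> Der G a -> Der G b.

Definition add (G : form -> Prop) (a : form) : form -> Prop := fun x => G x \/ x = a.

Lemma der_mono G G' a : (forall x, G x -> G' x) -> Der G a -> Der G' a.
Proof. intros H D; induction D; [apply d_hyp; auto|apply d_thm; auto|eapply d_mp; eauto]. Qed.

Lemma thm_id a : sICL (Imp a a).
Proof.
  eapply rule_mp; [eapply rule_mp; [apply (ipc_S _ a (Imp a a) a)| apply ipc_K] | apply ipc_K].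
Qed.

Lemma deduction G a b : Der (add G a) b -> Der G (Imp a b).
Proof.
  intro D; induction D.
  - destruct H as [H|H].
    + eapply d_mp; [apply d_thm, ipc_K| apply d_hyp; auto].
    + subst; apply d_thm, thm_id.
  - eapply d_mp; [apply d_thm, ipc_K| apply d_thm; auto].
  - eapply d_mp; [eapply d_mp; [apply d_thm, ipc_S|exact IHD1]|exact IHD2].
Qed.

Lemma undeduction G a b : Der G (Imp a b) -> Der (add G a) b.
Proof.
  intro D; eapply d_mp; [eapply der_mono; [|exact D]|apply d_hyp; right; auto].
  intros x Hx; left; auto.
Qed.

Lemma der_thm a : Der (fun _ => False) a -> sICL a.
Proof. intro D; induction D; [destruct H|auto|eapply rule_mp; eauto]. Qed.

Definition E0 : form -> Prop := fun _ => False.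

Lemma thm_of_der1 a b : Der (add E0 a) b -> sICL (Imp a b).
Proof. intro D; apply der_thm, deduction, D. Qed.

Lemma hyp1 G a : Der (add G a) a.
Proof. apply d_hyp; right; auto. Qed.

Lemma dmp G a b : sICL (Imp a b) -> Der G a -> Der G b.
Proof. intros; eapply d_mp; [apply d_thm|]; eauto. Qed.

Lemma dmp2 G a b c : sICL (Imp a (Imp b c)) -> Der G a -> Der G b -> Der G c.
Proof. intros; eapply d_mp; [eapply dmp|]; eauto. Qed.

Lemma thm_and a b : sICL a -> sICL b -> sICL (And a b).
Proof. intros; eapply rule_mp; [eapply rule_mp; [apply ipc_andI|]|]; eauto. Qed.

Lemma iff1 a b : sICL (Iff a b) -> sICL (Imp a b).
Proof. intro; eapply rule_mp; [apply ipc_andE1|]; eauto. Qed.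
Lemma iff2 a b : sICL (Iff a b) -> sICL (Imp b a).
Proof. intro; eapply rule_mp; [apply ipc_andE2|]; eauto. Qed.

Definition s3 (a b c : form) : nat -> form :=
  fun n => match n with 0 => a | 1 => b | 2 => c | _ => Var n end.

Lemma cond_and_fwd a b c : sICL (Imp (Cond a (And b c)) (And (Cond a b) (Cond a c))).
Proof. apply iff1. exact (rule_subst _ (s3 a b c) _ (ax_cond_and _)). Qed.
Lemma cond_and_bwd a b c : sICL (Imp (And (Cond a b) (Cond a c)) (Cond a (And b c))).
Proof. apply iff2. exact (rule_subst _ (s3 a b c) _ (ax_cond_and _)). Qed.
Lemma thm_top : sICL Top.
Proof. apply ipc_efq. Qed.
Lemma cond_top a : sICL (Cond a Top).
Proof.
  eapply rule_mp; [apply iff2; exact (rule_subst _ (s3 a a a) _ (ax_cond_top _))|apply thm_top].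
Qed.
Lemma sicl1 a b : sICL (Imp b (Cond a b)).
Proof. exact (rule_subst _ (s3 a b b) _ (ax_gam _ _ sicl_1)). Qed.
Lemma sicl2 a b : sICL (Imp (Cond a (Cond a b)) (Cond a b)).
Proof. exact (rule_subst _ (s3 a b b) _ (ax_gam _ _ sicl_2)). Qed.

Lemma RM a b c : sICL (Imp a b) -> sICL (Imp (Cond c a) (Cond c b)).
Proof.
  intro H.
  assert (H1 : sICL (Iff a (And a b))).
  { apply thm_and.
    - apply thm_of_der1. eapply dmp2; [apply ipc_andI|apply hyp1|eapply dmp; [exact H|apply hyp1]].
    - apply ipc_andE1. }
  pose proof (iff1 _ _ (rule_congR _ _ _ c H1)) as H2.
  apply thm_of_der1.
  eapply dmp; [apply ipc_andE2|]. eapply dmp; [apply cond_and_fwd|].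
  eapply dmp; [exact H2|apply hyp1].
Qed.

Lemma cond_nec a b : sICL b -> sICL (Cond a b).
Proof.
  intro H. eapply rule_mp; [apply RM|apply cond_top].
  eapply rule_mp; [apply ipc_K|exact H].
Qed.

Lemma congL' a a' c : sICL (Imp a a') -> sICL (Imp a' a) -> sICL (Imp (Cond a c) (Cond a' c)).
Proof. intros; apply iff1, rule_congL, thm_and; auto. Qed.

Lemma thm_mp_and a b : sICL (Imp (And (Imp a b) a) b).
Proof.
  apply thm_of_der1. eapply d_mp; [eapply dmp; [apply ipc_andE1|apply hyp1]|eapply dmp; [apply ipc_andE2|apply hyp1]].
Qed.

Lemma thm_or_idem a : sICL (Imp (Or a a) a).
Proof. eapply rule_mp; [eapply rule_mp; [apply ipc_orE|apply thm_id]|apply thm_id]. Qed.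

Lemma thm_or_cond a b c : sICL (Imp (Or (Cond a b) (Cond a c)) (Cond a (Or b c))).
Proof.
  eapply rule_mp; [eapply rule_mp; [apply ipc_orE|]|]; apply RM; [apply ipc_orI1|apply ipc_orI2].
Qed.

Lemma filter_closed (T : form -> Prop) (HT : forall a, Der T a -> T a) phi a :
  Der (fun x => T (Cond phi x)) a -> T (Cond phi a).
Proof.
  intro D; induction D.
  - exact H.
  - apply HT, d_thm, cond_nec, H.
  - apply HT. eapply dmp; [apply RM, thm_mp_and|].
    eapply dmp; [apply cond_and_bwd|]. eapply dmp2; [apply ipc_andI|apply d_hyp; exact IHD1|apply d_hyp; exact IHD2].
Qed.

Fixpoint enc (f : form) : nat :=
  match f with
  | Var n => to_nat (0, n)
  | Bot => to_nat (1, 0)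
  | And a b => to_nat (2, to_nat (enc a, enc b))
  | Or a b => to_nat (3, to_nat (enc a, enc b))
  | Imp a b => to_nat (4, to_nat (enc a, enc b))
  | Cond a b => to_nat (5, to_nat (enc a, enc b))
  end.

Lemma to_nat_inj x y : to_nat x = to_nat y -> x = y.
Proof. intro H; apply (f_equal of_nat) in H; rewrite !cancel_of_to in H; exact H. Qed.

Lemma enc_inj f : forall g, enc f = enc g -> f = g.
Proof.
  induction f; destruct g; intro H; cbn [enc] in H; apply to_nat_inj in H; try discriminate;
    try reflexivity; try (injection H as H; subst; reflexivity);
    apply (f_equal snd) in H; cbn [snd] in H; apply to_nat_inj in H;
    injection H as H1 H2; f_equal; auto.
Qed.

Record ptheory (T : form -> Prop) : Prop := {
  pt_closed : forall a, Der T a -> T a;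
  pt_cons : ~ T Bot;
  pt_prime : forall a b, T (Or a b) -> T a \/ T b }.

Section Lind.
Variable G D : form -> Prop.
Hypothesis Dor : forall d1 d2, D d1 -> D d2 -> exists d, D d /\ sICL (Imp (Or d1 d2) d).
Hypothesis Gok : forall d, D d -> ~ Der G d.

Definition bad (S : form -> Prop) := exists d, D d /\ Der S d.

Fixpoint ch (n : nat) : form -> Prop :=
  match n with
  | 0 => G
  | S m => fun x => ch m x \/ (enc x = m /\ ~ bad (add (ch m) x))
  end.

Lemma ch_mono n m : n <= m -> forall x, ch n x -> ch m x.
Proof.
  induction 1; auto. intros x Hx; simpl; left; auto.
Qed.

Lemma ch_ok n : ~ bad (ch n).
Proof.
  induction n.
  - intros (d & Hd & Hder). exact (Gok d Hd Hder).
  - intros (d & Hd & Hder). simpl in Hder.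
    destruct (classic (exists x, enc x = n /\ ~ bad (add (ch n) x))) as [(x & Hx & Hb)|Hno].
    + apply Hb. exists d; split; auto. eapply der_mono; [|exact Hder].
      intros y [Hy|[Hy1 Hy2]]; [left; auto|right; apply enc_inj; congruence].
    + apply IHn. exists d; split; auto. eapply der_mono; [|exact Hder].
      intros y [Hy|[Hy1 Hy2]]; auto. exfalso; apply Hno; eauto.
Qed.

Definition Lim : form -> Prop := fun x => exists n, ch n x.

Lemma compact a : Der Lim a -> exists n, Der (ch n) a.
Proof.
  intro Hd; induction Hd.
  - destruct H as [n Hn]; exists n; apply d_hyp; auto.
  - exists 0; apply d_thm; auto.
  - destruct IHHd1 as [n1 H1], IHHd2 as [n2 H2]. exists (Nat.max n1 n2).
    eapply d_mp; eapply der_mono; try eassumption; apply ch_mono; lia.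
Qed.

Lemma Lim_ok : ~ bad Lim.
Proof.
  intros (d & Hd & Hder). destruct (compact _ Hder) as [n Hn]. apply (ch_ok n). exists d; auto.
Qed.

Lemma Lim_closed a : Der Lim a -> Lim a.
Proof.
  intro Ha. exists (S (enc a)). simpl. right. split; auto.
  intros (d & Hd & Hder). apply Lim_ok. exists d; split; auto.
  eapply d_mp; [|exact Ha]. eapply der_mono; [|apply deduction; exact Hder].
  intros x Hx; exists (enc a); auto.
Qed.

Lemma not_Lim_bad a : ~ Lim a -> exists d, D d /\ Der Lim (Imp a d).
Proof.
  intro Hn. assert (Hb : bad (add (ch (enc a)) a)).
  { apply NNPP; intro Hb; apply Hn; exists (S (enc a)); simpl; right; auto. }
  destruct Hb as (d & Hd & Hder). exists d; split; auto.
  eapply der_mono; [|apply deduction; exact Hder]. intros x Hx; exists (enc a); auto.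
Qed.

Lemma Lim_prime a b : Lim (Or a b) -> Lim a \/ Lim b.
Proof.
  intro Hab. apply NNPP; intro Hn.
  destruct (not_Lim_bad a) as (d1 & Hd1 & H1); [intro; apply Hn; auto|].
  destruct (not_Lim_bad b) as (d2 & Hd2 & H2); [intro; apply Hn; auto|].
  destruct (Dor d1 d2 Hd1 Hd2) as (d & Hd & Hdd).
  apply Lim_ok. exists d; split; auto.
  eapply dmp; [exact Hdd|].
  eapply d_mp; [eapply d_mp; [eapply d_mp; [apply d_thm, ipc_orE|]|]|apply d_hyp; exact Hab].
  - apply deduction. eapply dmp; [apply ipc_orI1|]. apply undeduction; auto.
  - apply deduction. eapply dmp; [apply ipc_orI2|]. apply undeduction; auto.
Qed.

Lemma lindenbaum : exists T, (forall a, Der T a -> T a) /\ (forall a b, T (Or a b) -> T a \/ T b)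
  /\ (forall x, G x -> T x) /\ (forall d, D d -> ~ T d).
Proof.
  exists Lim. split; [exact Lim_closed|split; [exact Lim_prime|split]].
  - intros x Hx; exists 0; auto.
  - intros d Hd Ht. apply Lim_ok. exists d; split; auto. apply d_hyp; auto.
Qed.
End Lind.

Lemma extend G a : ~ Der G a -> exists T, ptheory T /\ (forall x, G x -> T x) /\ ~ T a.
Proof.
  intro H.
  destruct (lindenbaum G (fun d => d = a)) as (T & H1 & H2 & H3 & H4).
  - intros d1 d2 -> ->. exists a; split; auto. apply thm_or_idem.
  - intros d ->; auto.
  - exists T; split; [split; auto|split; auto].
    intro Hb. apply (H4 a eq_refl). apply H1. eapply dmp; [apply ipc_efq|apply d_hyp; auto].
Qed.

Definition CX : Type := { T : form -> Prop | ptheory T }.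
Definition cle (x y : CX) : Prop := forall a, proj1_sig x a -> proj1_sig y a.
Definition cR (A : CX -> Prop) (x y : CX) : Prop :=
  exists phi, (forall z, A z <-> proj1_sig z phi) /\
              (forall c, proj1_sig x (Cond phi c) -> proj1_sig y c).
Definition cV (n : nat) (x : CX) : Prop := proj1_sig x (Var n).

Lemma equiv_thm a b : (forall z : CX, proj1_sig z a -> proj1_sig z b) -> sICL (Imp a b).
Proof.
  intro H. apply NNPP; intro Hn.
  destruct (extend (add E0 a) b) as (T & HT & H1 & H2).
  { intro Hd; apply Hn, thm_of_der1, Hd. }
  apply H2, (H (exist _ T HT)), H1; right; auto.
Qed.

Lemma truth f : forall x : CX, sat cle cR cV x f <-> proj1_sig x f.
Proof.
  induction f; intros [T HT]; simpl.
  - reflexivity.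
  - split; [intros []|apply (pt_cons _ HT)].
  - rewrite (IHf1 (exist _ T HT)), (IHf2 (exist _ T HT)); simpl. split.
    + intros [A B]. apply (pt_closed _ HT). eapply dmp2; [apply ipc_andI|apply d_hyp..]; auto.
    + intro A; split; apply (pt_closed _ HT); (eapply dmp; [|apply d_hyp; exact A]);
        [apply ipc_andE1|apply ipc_andE2].
  - rewrite (IHf1 (exist _ T HT)), (IHf2 (exist _ T HT)); simpl. split.
    + intros [A|A]; apply (pt_closed _ HT); (eapply dmp; [|apply d_hyp; exact A]);
        [apply ipc_orI1|apply ipc_orI2].
    + apply (pt_prime _ HT).
  - split.
    + intro H. apply NNPP; intro Hn.
      destruct (extend (add T f1) f2) as (D & HD & H1 & H2).
      { intro Hd; apply Hn, (pt_closed _ HT), deduction, Hd. }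
      apply H2. apply (IHf2 (exist _ D HD)).
      apply (H (exist _ D HD)).
      * intros a Ha; apply H1; left; auto.
      * apply IHf1; simpl; apply H1; right; auto.
    + intros H [D HD] Hle Ha. apply IHf2; apply IHf1 in Ha; simpl in *.
      apply (pt_closed _ HD). eapply d_mp; apply d_hyp; [apply Hle; exact H|exact Ha].
  - split.
    + intro H. apply NNPP; intro Hn.
      destruct (extend (fun c => T (Cond f1 c)) f2) as (D & HD & H1 & H2).
      { intro Hd; apply Hn, (filter_closed _ (pt_closed _ HT)), Hd. }
      apply H2. apply (IHf2 (exist _ D HD)).
      apply H. exists f1. split; auto.
    + intros H y [phi [HA Hphi]]. apply IHf2. apply Hphi.
      assert (E : forall z : CX, proj1_sig z f1 <-> proj1_sig z phi).
      { intro z. rewrite <- HA. symmetry. apply IHf1. }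
      apply (pt_closed _ HT). eapply dmp; [apply congL'|apply d_hyp; exact H];
        apply equiv_thm; intro z; apply E.
Qed.

Lemma canon_frame : forall x0 : CX, cond_frame CX cle cR.
Proof.
  intro x0. split; [exact (inhabits x0)|split; [|split]].
  - intros x a H; exact H.
  - intros x y z H1 H2 a H; auto.
  - intros A _ x y z Hxy [phi [HA Hphi]]. exists z. split.
    + exists phi; split; auto.
    + intros a H; exact H.
Qed.

Lemma canon_sicl : sICL_frame CX cle cR.
Proof.
  intros A _. split.
  - intros [x Hx] y [phi [HA Hphi]] a Ha. apply Hphi; simpl in *.
    apply (pt_closed _ Hx). eapply dmp; [apply sicl1|apply d_hyp; exact Ha].
  - intros [x Hx] [y Hy] [phi [HA Hphi]]; simpl in Hphi.
    destruct (lindenbaum (fun c => x (Cond phi c)) (fun d => exists c, d = Cond phi c /\ ~ y c))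
      as (T & H1 & H2 & H3 & H4).
    + intros d1 d2 (c1 & -> & Hc1) (c2 & -> & Hc2). exists (Cond phi (Or c1 c2)). split.
      * exists (Or c1 c2); split; auto. intro Hc; destruct (pt_prime _ Hy _ _ Hc); auto.
      * apply thm_or_cond.
    + intros d (c & -> & Hc) Hd. apply Hc, Hphi.
      apply (pt_closed _ Hx). eapply dmp; [apply sicl2|apply d_hyp].
      apply (filter_closed _ (pt_closed _ Hx)); exact Hd.
    + assert (HT : ptheory T).
      { split; auto. intro Hb. apply (H4 (Cond phi Bot)).
        - exists Bot; split; auto. apply (pt_cons _ Hy).
        - apply H1. eapply dmp; [apply ipc_efq|apply d_hyp; exact Hb]. }
      exists (exist _ T HT), (exist _ y Hy). split; [|split].
      * exists phi; split; auto.
      * exists phi; split; auto. simpl. intros c Hc. apply NNPP; intro Hn.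
        apply (H4 (Cond phi c)); auto. exists c; auto.
      * intros a H; exact H.
Qed.

Lemma complete f : sICL_valid f -> sICL f.
Proof.
  intro H. apply NNPP; intro Hn.
  destruct (extend E0 f) as (T & HT & _ & H2).
  { intro Hd; apply Hn, der_thm, Hd. }
  apply H2. apply (truth f (exist _ T HT)).
  apply H.
  - apply (canon_frame (exist _ T HT)).
  - apply canon_sicl.
  - intros n x y Hxy Hx; apply Hxy, Hx.
Qed.

Theorem theorem7p17 : forall f : form, sICL f <-> sICL_valid f.
Proof. intro f; split; [apply sound|apply complete]. Qed.
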